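(* For every $n\ge 2$, the minimum size of a string attractor of the prefix $\mathbf{pd}[0..n-1]$ of the period-doubling sequence is $2$.
   Context: The period-doubling sequence $\mathbf{pd}=\mathtt{101110101011}\cdots$ is the infinite fixed point, starting with $1$, of the morphism $1\mapsto 10$, $0\mapsto 11$; it is indexed starting at $0$, and $\mathbf{pd}[0..n-1]$ is its length-$n$ prefix. A string attractor of a finite word $w=w[0..n-1]$ is a set $S\subseteq\{0,\ldots,n-1\}$ such that every nonempty factor $f$ of $w$ has an occurrence $w[p..q]=f$ with $p\le i\le q$ for some $i\in S$. *)

(* Defs.v *)
From mathcomp Require Import all_boot.
Set Implicit Arguments. Unset Strict Implicit. Unset Printing Implicit Defensive.

(* The period-doubling morphism 1 -> 10, 0 -> 11 (letters encoded as bool,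
   true = 1, false = 0), extended to words. *)
Definition pd_morph (b : bool) : seq bool := if b then [:: true; false] else [:: true; true].
Definition pd_morph_word (w : seq bool) : seq bool := flatten (map pd_morph w).

Definition pd_iter (k : nat) : seq bool := iter k pd_morph_word [:: true].

(* pd[i]: the i-th letter of the fixed point, read in h^(i+1)(1),
   which has length 2^(i+1) > i. *)
Definition pd (i : nat) : bool := nth false (pd_iter i.+1) i.

Definition pd_prefix (n : nat) : seq bool := mkseq pd n.

Definition factor_at (w : seq bool) (p q : nat) : seq bool := take (q - p).+1 (drop p w).

Definition string_attractor (w : seq bool) (S : {set 'I_(size w)}) : Prop :=
  forall i j, i <= j < size w ->
    exists p q (s : 'I_(size w)),
      [/\ p <= q < size w, factor_at w p q = factor_at w i j, s \in S & p <= s <= q].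

Definition min_attractor_size (w : seq bool) (k : nat) : Prop :=
  (exists S : {set 'I_(size w)}, string_attractor S /\ #|S| = k) /\
  (forall S : {set 'I_(size w)}, string_attractor S -> k <= #|S|).

(* Main.v *)
Require Import Defs.
From mathcomp Require Import all_boot zify.

Lemma morph_cons b w : pd_morph_word (b :: w) = pd_morph b ++ pd_morph_word w.
Proof. by []. Qed.

Lemma size_morph w : size (pd_morph_word w) = (size w).*2.
Proof. elim: w => //= b w IH; rewrite morph_cons size_cat IH; by case: b. Qed.

Lemma nth_morph_even w i : i < size w -> nth false (pd_morph_word w) i.*2 = true.
Proof.
elim: w i => //= b w IH [|i] Hi; rewrite morph_cons; first by move: Hi; case: b.
rewrite doubleS; move: Hi; case: b => /= Hi; exact: IH.
Qed.

Lemma nth_morph_odd w i : i < size w -> nth false (pd_morph_word w) i.*2.+1 = ~~ nth false w i.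
Proof.
elim: w i => [|b w IH] [|i] // Hi; rewrite morph_cons; first by move: Hi; case: b.
rewrite doubleS; move: Hi; case: b => /= Hi; exact: IH.
Qed.

Lemma pd_iter_S k : pd_iter k.+1 = pd_morph_word (pd_iter k).
Proof. by rewrite /pd_iter iterS. Qed.

Lemma size_pd_iter k : size (pd_iter k) = 2 ^ k.
Proof. elim: k => // k IH; by rewrite pd_iter_S size_morph IH expnS mul2n. Qed.

Lemma pd_iter_ext k : exists r, pd_iter k.+1 = pd_iter k ++ r.
Proof.
elim: k => [|k [r Hr]]; first by exists [:: false].
exists (pd_morph_word r); rewrite pd_iter_S [in LHS]Hr /pd_morph_word map_cat flatten_cat pd_iter_S.
by [].
Qed.

Lemma pd_iter_mono k K i : k <= K -> i < 2 ^ k ->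
  nth false (pd_iter K) i = nth false (pd_iter k) i.
Proof.
move=> kK; elim: K kK => [|K IH]; first by rewrite leqn0 => /eqP ->.
rewrite leq_eqVlt => /orP [/eqP -> //|]; rewrite ltnS => kK Hi.
have [r ->] := pd_iter_ext K; rewrite nth_cat size_pd_iter.
have -> : i < 2 ^ K by apply: leq_trans Hi _; rewrite leq_exp2l.
exact: IH.
Qed.

Lemma lt2exp i : i < 2 ^ i. Proof. exact: ltn_expl. Qed.

Lemma pdE K i : i < 2 ^ K -> pd i = nth false (pd_iter K) i.
Proof.
move=> Hi; rewrite /pd.
case: (leqP i.+1 K) => H.
  by rewrite (@pd_iter_mono i.+1 K i H) // ltnW // lt2exp.
by rewrite (@pd_iter_mono K i.+1 i (ltnW H) Hi).
Qed.

Lemma pd_even i : pd i.*2 = true.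
Proof.
rewrite (@pdE i.+1); last first.
  by rewrite expnS mul2n ltn_double lt2exp.
by rewrite pd_iter_S nth_morph_even // size_pd_iter lt2exp.
Qed.

Lemma pd_odd i : pd i.*2.+1 = ~~ pd i.
Proof.
rewrite (@pdE i.+1); last first.
  by rewrite expnS mul2n ltn_Sdouble lt2exp.
by rewrite pd_iter_S nth_morph_odd ?size_pd_iter -?pdE // lt2exp.
Qed.


Definition x m := pd m.-1.

Lemma x_odd m : odd m -> x m = true.
Proof.
move=> Hm; rewrite /x -(odd_double_half m) Hm /=; exact: pd_even.
Qed.

Lemma x_double m : 0 < m -> x m.*2 = ~~ x m.
Proof.
case: m => // m _; rewrite /x doubleS /=; exact: pd_odd.
Qed.

Lemma x_nu e o : odd o -> x (2 ^ e * o) = ~~ odd e.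
Proof.
move=> Ho; elim: e => [|e IH]; first by rewrite mul1n x_odd.
rewrite expnS -mulnA mul2n x_double ?IH ?oddS //.
rewrite muln_gt0 expn_gt0 /=; by move: Ho; case: (o).
Qed.

Lemma even_half m : ~~ odd m -> m = (m./2).*2.
Proof. move=> H; rewrite -{1}(odd_double_half m) (negbTE H). by []. Qed.

Lemma x_shift e m d : 2 ^ e %| d -> ~~ (2 ^ e %| m) -> x (m + d) = x m.
Proof.
elim: e m d => [|e IH] m d; first by move=> _; rewrite expn0 dvd1n.
move=> Hd Hm.
have Hd2 : 2 %| d by apply: dvdn_trans Hd; rewrite expnSr; apply: dvdn_mull.
case Om: (odd m).
  rewrite !x_odd // oddD Om /=. by rewrite -dvdn2 Hd2.
have Ed : d = (d./2).*2 by apply: even_half; rewrite -dvdn2.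
have Em : m = (m./2).*2 by apply: even_half; rewrite Om.
have Hd' : 2 ^ e %| d./2 by rewrite -(@dvdn_pmul2r 2) // -expnSr muln2 -Ed.
have Hm' : ~~ (2 ^ e %| m./2) by rewrite -(@dvdn_pmul2r 2) // -expnSr muln2 -Em.
rewrite Ed Em -doubleD.
have m0 : 0 < m./2 by move: Hm'; case: (m./2) => //; rewrite dvdn0.
rewrite x_double ?x_double ?IH //.
by rewrite addn_gt0 m0.
Qed.


Lemma two_mult {e u v} : u < v -> 2 ^ e %| u -> 2 ^ e %| v ->
  exists2 z, u <= z <= v & 2 ^ e.+1 %| z.
Proof.
move=> uv /dvdnP [p Hu] /dvdnP [q Hv]; subst u v.
have E : 0 < 2 ^ e by rewrite expn_gt0.
rewrite ltn_mul2r E /= in uv.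
exists (p.+1./2.*2 * 2 ^ e).
  have H := odd_double_half p.+1.
  rewrite !leq_mul2r; apply/andP; split; apply/orP; right; move: H; case: (odd _) => /=; lia.
apply/dvdnP; exists p.+1./2; rewrite expnSr -mul2n; nia.
Qed.

Lemma pivot a b : 0 < a <= b -> exists c e,
  [/\ a <= c <= b, 2 ^ e %| c, ~~ (2 ^ e.+1 %| c) &
      forall m, a <= m <= b -> m != c -> ~~ (2 ^ e %| m)].
Proof.
move=> /andP [a0 ab].
pose P e := has (fun m => 2 ^ e %| m) (index_iota a b.+1).
have exP : exists e, P e.
  exists 0; apply/hasP; exists a; last by rewrite expn0 dvd1n.
  by rewrite mem_index_iota leqnn ltnS.
have ubP : forall e, P e -> e <= b.
  move=> e /hasP [m]; rewrite mem_index_iota => /andP [am mb] Hd.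
  have m0 : 0 < m by apply: leq_trans am.
  apply: leq_trans (ltnW (lt2exp e)) _; rewrite -ltnS; apply: leq_trans mb.
  by rewrite ltnS dvdn_leq.
case: (ex_maxnP exP ubP) => e Pe maxe.
case/hasP: Pe => c; rewrite mem_index_iota => /andP [ac cb] Hc.
have noP : ~~ P e.+1 by apply/negP => /maxe; rewrite ltnn.
exists c, e; split => //.
- by rewrite ac -ltnS.
- apply/negP => H; move/negP: noP; apply; apply/hasP; exists c => //.
  by rewrite mem_index_iota ac.
move=> m /andP [am mb] mc; apply/negP => Hm; move/negP: noP; apply.
have [lt|gt|Emc] := ltngtP m c.
- case: (two_mult lt Hm Hc) => z /andP [mz zc] Hz; apply/hasP; exists z => //.
  rewrite mem_index_iota (leq_trans am mz) /=; lia.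
- case: (two_mult gt Hc Hm) => z /andP [mz zc] Hz; apply/hasP; exists z => //.
  rewrite mem_index_iota (leq_trans ac mz) /=; lia.
by rewrite Emc eqxx in mc.
Qed.


Definition good n s1 s2 a b := exists a', [/\ 0 < a', a' + (b - a) <= n,
  (a' <= s1 <= a' + (b - a)) || (a' <= s2 <= a' + (b - a)) &
  forall u, u <= b - a -> x (a' + u) = x (a + u)].

Lemma good_triv n s1 s2 a b : 0 < a -> b <= n ->
  (a <= s1 <= b) || (a <= s2 <= b) -> good n s1 s2 a b.
Proof.
move=> a0 bn H; exists a; split => //.
- case/orP: H => /andP [? ?]; lia.
- case/orP: H => /andP [? ?]; apply/orP; [left|right]; lia.
Qed.

Lemma x_shiftN e m d : 2 ^ e %| d -> ~~ (2 ^ e %| m + d) -> x (m + d) = x m.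
Proof.
move=> Hd Hm; have Hm' : ~~ (2 ^ e %| m).
  by apply/negP => H; move/negP: Hm; apply; exact: dvdn_add H Hd.
exact: x_shift Hd Hm'.
Qed.

Lemma retarget n s1 s2 a b c e t : 0 < a -> a <= c <= b -> 2 ^ e %| c ->
  (forall m, a <= m <= b -> m != c -> ~~ (2 ^ e %| m)) ->
  2 ^ e %| t -> 0 < t -> x t = x c -> t + 2 ^ e <= n.+1 ->
  (t == s1) || (t == s2) -> good n s1 s2 a b.
Proof.
move=> a0 /andP [ac cb] Hc Hpiv Ht t0 xt tn ts.
have E0 : 0 < 2 ^ e by rewrite expn_gt0.
have Et : 2 ^ e <= t by apply: dvdn_leq.
have Hlo : c < a + 2 ^ e.
  rewrite ltnNge; apply/negP => H.
  have := Hpiv (c - 2 ^ e) ltac:(lia) ltac:(lia).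
  by rewrite dvdn_sub ?dvdnn.
have Hhi : b < c + 2 ^ e.
  rewrite ltnNge; apply/negP => H.
  have := Hpiv (c + 2 ^ e) ltac:(lia) ltac:(lia).
  by rewrite dvdn_add ?dvdnn.
exists (t - (c - a)); split.
- lia.
- lia.
- case/orP: ts => /eqP <-; apply/orP; [left|right]; lia.
move=> u Hu.
case: (eqVneq (a + u) c) => Hau.
  have -> : t - (c - a) + u = t by lia.
  by rewrite Hau.
have Hm := Hpiv (a + u) ltac:(lia) Hau.
case: (leqP c t) => ct.
  have -> : t - (c - a) + u = (a + u) + (t - c) by lia.
  apply: x_shift Hm; exact: dvdn_sub.
have Eq : a + u = (t - (c - a) + u) + (c - t) by lia.
rewrite Eq; symmetry; apply: x_shiftN; first exact: dvdn_sub Hc Ht.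
by rewrite -Eq.
Qed.


Lemma odd_part e c : 2 ^ e %| c -> ~~ (2 ^ e.+1 %| c) -> exists2 o, odd o & c = 2 ^ e * o.
Proof.
move=> /dvdnP [o ->] H; exists o; last by rewrite mulnC.
apply/negPn/negP => Ho; move/negP: H; apply.
rewrite (@even_half o Ho) expnS -mul2n mulnC; apply/dvdnP; exists o./2; nia.
Qed.

Lemma x_pow e : x (2 ^ e) = ~~ odd e.
Proof. by rewrite -[2 ^ e]muln1 x_nu. Qed.

Lemma main_window h n a b : 4 * 2 ^ h <= n < 8 * 2 ^ h -> 0 < a <= b -> b <= n ->
  good n (2 * 2 ^ h) (if n < 6 * 2 ^ h then 3 * 2 ^ h else 4 * 2 ^ h) a b.
Proof.
set H := 2 ^ h => /andP [n1 n2] /andP [a0 ab] bn.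
have H0 : 0 < H by rewrite expn_gt0.
have H2 : 2 ^ h.+1 = 2 * H by rewrite expnS.
have H4 : 2 ^ h.+2 = 4 * H by rewrite !expnS mulnA.
have [c [e [/andP [ac cb] Hc Hc1 Hpiv]]] := @pivot a b ltac:(lia).
have [o oodd co] := @odd_part e c Hc Hc1.
have xc : x c = ~~ odd e by rewrite co x_nu.
set s2 := if _ then _ else _.
have x3 : x (3 * H) = ~~ odd h by rewrite mulnC /H x_nu.
have x5 : x (5 * H) = ~~ odd h by rewrite mulnC /H x_nu.
have x4 : x (4 * H) = ~~ odd h by rewrite -H4 x_pow !oddS negbK.
have x2 : x (2 * H) = ~~ odd h.+1 by rewrite -H2 x_pow.
case: (boolP ((e <= h.+1) && (odd e == odd h.+1))) => [/andP [eh /eqP oe]|C1].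
  apply: (@retarget n _ _ a b c e (2 * H)) => //.
  - by rewrite andbC ac cb.
  - by rewrite -H2 dvdn_exp2l.
  - by rewrite muln_gt0.
  - by rewrite x2 xc oe.
  - have : 2 ^ e <= 2 ^ h.+1 by rewrite leq_exp2l.
    rewrite H2 => Ee; clear -n1 Ee; lia.
  - by rewrite eqxx.
case: (boolP ((e <= h) && (odd e == odd h))) => [/andP [eh /eqP oe]|C2].
  have Eh : 2 ^ e <= H by rewrite leq_exp2l.
  have dH : 2 ^ e %| H by rewrite dvdn_exp2l.
  rewrite /s2; case: ifP => n6.
    apply: (@retarget n _ _ a b c e (3 * H)) => //.
    - by rewrite ac cb.
    - by rewrite dvdn_mull.
    - by rewrite muln_gt0.
    - by rewrite xc x3 oe.
    - clear -Eh n1; lia.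
    - by rewrite eqxx orbT.
  apply: (@retarget n _ _ a b c e (4 * H)) => //.
  - by rewrite ac cb.
  - by rewrite dvdn_mull.
  - by rewrite muln_gt0.
  - by rewrite x4 xc oe.
  - move/negbT: n6; rewrite -leqNgt => n6; clear -Eh n6; lia.
  - by rewrite eqxx orbT.
have eh : h.+2 <= e.
  case: (leqP e h) => leh.
    move: C1 C2; rewrite leh (leq_trans leh (leqnSn _)) /= ?oddS.
    by case: (odd e); case: (odd h).
  rewrite ltnNge; apply/negP => le2.
  have Ee : e = h.+1 by clear -leh le2; lia.
  by move: C1; rewrite Ee leqnn eqxx.
have c4 : c = 4 * H.
  have [w Hw] : exists w, 2 ^ e = 4 * H * w.
    exists (2 ^ (e - h.+2)); by rewrite -H4 -expnD subnKC.
  have c8 : 4 * H * (w * o) < (4 * H) * 2.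
    rewrite mulnA -Hw -co; clear -cb bn n2; lia.
  have cpos : 0 < w * o.
    move: (leq_trans a0 ac); rewrite co Hw -mulnA muln_gt0; by case/andP.
  rewrite ltn_pmul2l in c8; last by rewrite muln_gt0 H0.
  have wo : w * o = 1 by clear -c8 cpos; lia.
  by rewrite co Hw -!mulnA wo muln1.
rewrite /s2; case: ifP => n6; last first.
  apply: good_triv => //; apply/orP; right; clear -c4 ac cb; lia.
case: (leqP a (3 * H)) => a3.
  apply: good_triv => //; apply/orP; right; clear -c4 ac cb a3; lia.
exists (a - H); split.
- clear -a3 H0; lia.
- clear -bn a3 ab; lia.
- apply/orP; right; clear -ac c4 cb a3; lia.
move=> u Hu.
have -> : a + u = (a - H + u) + H by clear -a3; lia.
set m := a - H + u.
case: (boolP (2 ^ h %| m)) => Hm; last by rewrite (@x_shift h m H) ?dvdnn.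
case/dvdnP: Hm => q Hq.
have q34 : (q == 3) || (q == 4).
  have : 2 * H < q * H < 5 * H.
    move: Hq; rewrite /m => Hq; clear -Hq a3 Hu bn n6 ab; lia.
  rewrite !ltn_mul2r H0 /=; case: q {Hq} => [|[|[|[|[|q]]]]] //.
rewrite Hq; case/orP: q34 => /eqP ->.
  by rewrite -mulSnr x3 x4.
by rewrite -mulSnr x5 x4.
Qed.


Lemma size_pdp n : size (pd_prefix n) = n.
Proof. by rewrite size_mkseq. Qed.

Lemma factorE n p q : p <= q -> q < n ->
  factor_at (pd_prefix n) p q = mkseq (fun u => pd (p + u)) (q - p).+1.
Proof.
move=> pq qn; apply: (@eq_from_nth _ false).
  rewrite size_takel ?size_mkseq // size_drop size_pdp; lia.
move=> u; rewrite size_takel ?size_drop ?size_pdp; last lia.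
move=> Hu'.
rewrite nth_take // nth_drop nth_mkseq // nth_mkseq //; lia.
Qed.

Lemma attractor_from_good n s1 s2 (h1 : s1.-1 < size (pd_prefix n))
  (h2 : s2.-1 < size (pd_prefix n)) :
  0 < s1 -> 0 < s2 ->
  (forall a b, 0 < a <= b -> b <= n -> good n s1 s2 a b) ->
  string_attractor [set Ordinal h1; Ordinal h2].
Proof.
move=> s10 s20 G i j /andP [ij]; rewrite [X in _ < X]size_pdp => jn.
have [a' [a0 an Hs Hw]] := G i.+1 j.+1 ltac:(lia) ltac:(lia).
have Hs' : (a' <= s1 <= a' + (j - i)) || (a' <= s2 <= a' + (j - i)).
  by move: Hs; rewrite subSS.
exists a'.-1, (a'.-1 + (j - i)).
have Hf : factor_at (pd_prefix n) a'.-1 (a'.-1 + (j - i)) = factor_at (pd_prefix n) i j.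
  rewrite !factorE; try lia.
  have -> : a'.-1 + (j - i) - a'.-1 = j - i by lia.
  rewrite /mkseq; apply/eq_in_map => u; rewrite mem_iota add0n => Hu.
  have := Hw u; rewrite subSS /x.
  have -> : (a' + u).-1 = a'.-1 + u by lia.
  have -> : (i.+1 + u).-1 = i + u by lia.
  move=> ->; lia.
have Hq : a'.-1 <= a'.-1 + (j - i) < size (pd_prefix n) by rewrite size_pdp; lia.
case/orP: Hs' => /andP [l r].
  exists (Ordinal h1); split => //; first by rewrite !inE eqxx.
  rewrite /=; lia.
exists (Ordinal h2); split => //; first by rewrite !inE eqxx orbT.
rewrite /=; lia.
Qed.


Lemma letter n (S : {set 'I_(size (pd_prefix n))}) i : i < n ->
  string_attractor S -> exists2 s : 'I_(size (pd_prefix n)), s \in S & pd s = pd i.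
Proof.
move=> iN /(_ i i); rewrite leqnn /=.
have iN' : i < size (pd_prefix n) by rewrite size_pdp.
move=> /(_ iN') [p [q [s [/andP [pq qn] Hf sS /andP [ps sq]]]]].
rewrite size_pdp in qn.
rewrite (@factorE n p q pq qn) (@factorE n i i (leqnn i) iN) subnn in Hf.
have := congr1 size Hf; rewrite !size_mkseq => /eqP; rewrite eqSS subn_eq0 => qp.
have ep : p = q by lia.
have es : nat_of_ord s = p by lia.
exists s => //.
have := congr1 (nth false ^~ 0) Hf; rewrite !nth_mkseq ?addn0 //.
by rewrite es.
Qed.

Lemma lower n (S : {set 'I_(size (pd_prefix n))}) : 2 <= n -> string_attractor S -> 2 <= #|S|.
Proof.
move=> n2 HS.
have [s1 s1S e1] := @letter n S 0 ltac:(lia) HS.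
have [s2 s2S e2] := @letter n S 1 ltac:(lia) HS.
have p0 : pd 0 = true by exact: (pd_even 0).
have p1 : pd 1 = false by rewrite (pd_odd 0) p0.
have ne : s1 != s2 by apply/negP => /eqP E; move: e1 e2; rewrite E p0 p1 => ->.
have := subset_leq_card (A := [set s1; s2]) (B := S).
rewrite cards2 ne; apply; apply/subsetP => z; rewrite !inE => /orP [] /eqP ->//.
Qed.


Lemma small_good n a b : 2 <= n <= 3 -> 0 < a <= b -> b <= n -> good n 1 2 a b.
Proof.
move=> /andP [n2 n3] /andP [a0 ab] bn.
case: (leqP a 2) => a2.
  apply: good_triv => //; apply/orP; case: (a =P 1) => [->|a1]; [left|right]; lia.
have ea : a = 3 by lia.
have eb : b = 3 by lia.
exists 1; split => //; first lia.
move=> u; rewrite ea eb subnn leqn0 => /eqP ->.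
by rewrite !x_odd.
Qed.

Theorem theorem3 (n : nat) : 2 <= n -> min_attractor_size (pd_prefix n) 2.
Proof.
move=> n2; split; last by move=> S; exact: lower.
case: (leqP n 3) => n3.
  have h1 : (1 : nat).-1 < size (pd_prefix n) by rewrite size_pdp; lia.
  have h2 : (2 : nat).-1 < size (pd_prefix n) by rewrite size_pdp; lia.
  exists [set Ordinal h1; Ordinal h2]; split.
    apply: attractor_from_good => // a b ab bn; apply: small_good => //; lia.
  by rewrite cards2.
have n0 : 0 < n by lia.
have := trunc_log_bounds (isT : 1 < 2) n0.
set k := trunc_log 2 n => /andP [k1 k2].
have k2' : 2 <= k.
  rewrite leqNgt; apply/negP => kl.
  have : 2 ^ k.+1 <= 2 ^ 2 by rewrite leq_exp2l.
  lia.
set h := k - 2.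
have Ek : k = h.+2 by rewrite /h; lia.
rewrite Ek !expnS mulnA in k1 k2.
have Hb : 4 * 2 ^ h <= n < 8 * 2 ^ h by clear -k1 k2; lia.
set s2 := if n < 6 * 2 ^ h then 3 * 2 ^ h else 4 * 2 ^ h.
have H0 : 0 < 2 ^ h by rewrite expn_gt0.
have h1 : (2 * 2 ^ h).-1 < size (pd_prefix n) by rewrite size_pdp; lia.
have h2 : s2.-1 < size (pd_prefix n).
  rewrite size_pdp /s2; case: ifP => _; lia.
exists [set Ordinal h1; Ordinal h2]; split.
  apply: attractor_from_good.
  - lia.
  - rewrite /s2; case: ifP => _; lia.
  - move=> a b ab bn; exact: main_window.
have ne : Ordinal h1 != Ordinal h2.
  apply/eqP => /(congr1 val) /=; rewrite /s2; case: ifP => _; lia.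
by rewrite cards2 ne.
Qed.
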